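(* Let $q\ge 3$ be a prime power and let $P\subseteq[0,q-2]^n$ and $Q\subseteq[0,q-2]^m$ be integral convex polytopes. Then the join $P*Q\subseteq[0,q-2]^{n+m+1}$ satisfies $$N(P*Q)=\max\Big\{(q-1)^{n+m},\ N(P)(q-1)^{m+1},\ N(Q)(q-1)^{n+1},\ (q-1)N(P)N(Q)+\big((q-1)^n-N(P)\big)\big((q-1)^m-N(Q)\big)\Big\},$$ and consequently $$\delta(P*Q)=\min\Big\{1-\tfrac{1}{q-1},\ \delta(P),\ \delta(Q),\ \delta(P)+\delta(Q)-\delta(P)\delta(Q)\tfrac{q}{q-1}\Big\}.$$
   Context: The join of integral convex polytopes $P\subseteq\mathbb{R}^n$ and $Q\subseteq\mathbb{R}^m$ is $P*Q=\mathrm{conv}\big(\{(p,\mathbf{0}^m,0):p\in P\}\cup\{(\mathbf{0}^n,y,1):y\in Q\}\big)\subseteq\mathbb{R}^{n+m+1}$. For an integral convex polytope $P\subseteq[0,q-2]^n$, $\mathcal{L}_P=\mathrm{span}_{\mathbb{F}_q}\{x^p: p\in P\cap\mathbb{Z}^n\}$, $N(P)=\max_{0\neq f\in\mathcal{L}_P}|Z(f)|$ where $Z(f)$ is the set of zeros of $f$ in $(\mathbb{F}_q^\times)^n$, and $\delta(P)=\big((q-1)^n-N(P)\big)/(q-1)^n$ (computed with respect to the ambient dimension of the polytope; e.g. $(q-1)^{n+m+1}$ for $P*Q$). *)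

(* Defs.v *)
From HB Require Import structures.
From mathcomp Require Import all_boot all_order all_algebra all_field.
From mathcomp Require Import boolp.
Set Implicit Arguments. Unset Strict Implicit. Unset Printing Implicit Defensive.
Import Order.TTheory GRing.Theory Num.Theory.
Local Open Scope ring_scope.

(* An integral convex polytope in R^n is given by a finite list of integer
   points (its vertices / generators); the polytope is their convex hull. *)
Definition in_conv (n : nat) (V : seq 'rV[int]_n) (x : 'rV[rat]_n) : Prop :=
  exists lam : 'I_(size V) -> rat,
    [/\ forall k, 0 <= lam k, \sum_k lam k = 1 &
        x = \sum_k lam k *: map_mx (fun z : int => z%:~R) (nth 0 V k)].

Definition in_box (q n : nat) (V : seq 'rV[int]_n) : Prop :=
  forall x, in_conv V x -> forall i, 0 <= x ord0 i <= (q - 2)%:R.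

Definition join_pts (n m : nat) (VP : seq 'rV[int]_n) (VQ : seq 'rV[int]_m)
  : seq 'rV[int]_(n + m + 1) :=
  [seq row_mx (row_mx v 0) 0 | v <- VP] ++
  [seq row_mx (row_mx 0 w) (1 : 'rV[int]_1) | w <- VQ].

(* Exponent vectors in [0, q-2]^n, q = #|F|. *)
Definition expo (F : finFieldType) (n : nat) := {ffun 'I_n -> 'I_(#|F|.-1)}.

Definition expo_vec (F : finFieldType) (n : nat) (e : expo F n) : 'rV[rat]_n :=
  \row_i ((e i : nat)%:R).

(* A polynomial with exponents in [0,q-2]^n, given by its coefficients. *)
Definition coefs (F : finFieldType) (n : nat) := {ffun expo F n -> F}.

Definition evalc (F : finFieldType) (n : nat) (c : coefs F n) (t : 'I_n -> F) : F :=
  \sum_(e : expo F n) c e * \prod_(i < n) t i ^+ (e i : nat).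

Definition zeros (F : finFieldType) (n : nat) (c : coefs F n) : {set {ffun 'I_n -> F}} :=
  [set t : {ffun 'I_n -> F} | [forall i, t i != 0] && (evalc c t == 0)].

Definition inL (F : finFieldType) (n : nat) (V : seq 'rV[int]_n) (c : coefs F n) : Prop :=
  forall e, c e != 0 -> in_conv V (expo_vec e).

Definition Nmax (F : finFieldType) (n : nat) (V : seq 'rV[int]_n) : nat :=
  \max_(c : coefs F n | (c != 0) && `[< inL V c >]) #|zeros c|.

Definition delta (F : finFieldType) (n : nat) (V : seq 'rV[int]_n) : rat :=
  (((#|F|.-1) ^ n)%:R - (Nmax F V)%:R) / ((#|F|.-1) ^ n)%:R.

(* Main.v *)
Require Import Defs.
From HB Require Import structures.
From mathcomp Require Import all_boot all_order all_algebra all_field.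
From mathcomp Require Import boolp.
Set Implicit Arguments. Unset Strict Implicit. Unset Printing Implicit Defensive.
Import Order.TTheory GRing.Theory Num.Theory.
Local Open Scope ring_scope.

Lemma qpos (F : finFieldType) : (0 < #|F|.-1)%N.
Proof. by have := card_finNzRing_gt1 F; case: #|F| => [|[|k]]. Qed.

Definition o0 (F : finFieldType) : 'I_(#|F|.-1) := Ordinal (qpos F).
Definition o1 (F : finFieldType) : 'I_(#|F|.-1) := Ordinal (ltn_pmod 1 (qpos F)).

Lemma splitl p r (j : 'I_p) : split (lshift r j) = inl j.
Proof. exact: (unsplitK (inl _ j)). Qed.
Lemma splitr p r (j : 'I_r) : split (rshift p j) = inr j.
Proof. exact: (unsplitK (inr _ j)). Qed.

Section Join.
Variables (F : finFieldType) (n m : nat).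
Local Notation q := #|F|.
Local Notation fi a := (@lshift (n+m) 1 (@lshift n m a)).
Local Notation mi b := (@lshift (n+m) 1 (@rshift n m b)).
Local Notation li := (@rshift (n+m) 1 (@ord0 0)).

Lemma idx_case (P : 'I_(n+m+1) -> Prop) :
  (forall a, P (fi a)) -> (forall b, P (mi b)) -> P li -> forall i, P i.
Proof.
move=> h1 h2 h3 i; case: (split_ordP i) => [j ->|k ->].
  by case: (split_ordP j) => [a ->|b ->].
by rewrite (ord1 k).
Qed.

Definition emb1 (e1 : expo F n) : expo F (n+m+1) :=
  [ffun i => match split i with
             | inl j => match split j with inl a => e1 a | inr _ => o0 F end
             | inr _ => o0 F end].
Definition emb2 (e2 : expo F m) : expo F (n+m+1) :=
  [ffun i => match split i with
             | inl j => match split j with inl _ => o0 F | inr b => e2 b end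
             | inr _ => o1 F end].
Definition proj1 (e : expo F (n+m+1)) : expo F n := [ffun a => e (fi a)].
Definition proj2 (e : expo F (n+m+1)) : expo F m := [ffun b => e (mi b)].
Definition type1 (e : expo F (n+m+1)) : bool :=
  ((e li : nat) == 0)%N && [forall b, (e (mi b) : nat) == 0]%N.
Definition type2 (e : expo F (n+m+1)) : bool :=
  ((e li : nat) == 1)%N && [forall a, (e (fi a) : nat) == 0]%N.

Lemma emb1_fi e1 a : emb1 e1 (fi a) = e1 a.
Proof. by rewrite ffunE !splitl. Qed.
Lemma emb1_mi e1 b : emb1 e1 (mi b) = o0 F.
Proof. by rewrite ffunE splitl splitr. Qed.
Lemma emb1_li e1 : emb1 e1 li = o0 F.
Proof. by rewrite ffunE splitr. Qed.
Lemma emb2_fi e2 a : emb2 e2 (fi a) = o0 F.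
Proof. by rewrite ffunE !splitl. Qed.
Lemma emb2_mi e2 b : emb2 e2 (mi b) = e2 b.
Proof. by rewrite ffunE splitl splitr. Qed.
Lemma emb2_li e2 : emb2 e2 li = o1 F.
Proof. by rewrite ffunE splitr. Qed.

Hypothesis q3 : (1 < q.-1)%N.

Lemma o1E : (o1 F : nat) = 1%N.
Proof. by rewrite /= modn_small. Qed.

Lemma proj1K e1 : proj1 (emb1 e1) = e1.
Proof. by apply/ffunP => a; rewrite ffunE emb1_fi. Qed.
Lemma proj2K e2 : proj2 (emb2 e2) = e2.
Proof. by apply/ffunP => a; rewrite ffunE emb2_mi. Qed.

Lemma type1_emb1 e1 : type1 (emb1 e1).
Proof. rewrite /type1 emb1_li eqxx /=.
by apply/forallP => b; rewrite emb1_mi. Qed.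
Lemma type2_emb2 e2 : type2 (emb2 e2).
Proof. rewrite /type2 emb2_li o1E eqxx /=.
by apply/forallP => b; rewrite emb2_fi. Qed.
Lemma type1_emb2 e2 : type1 (emb2 e2) = false.
Proof. by rewrite /type1 emb2_li o1E. Qed.
Lemma type21 e : type2 e -> ~~ type1 e.
Proof. by case/andP => /eqP h _; rewrite /type1 h. Qed.

Lemma emb1K e : type1 e -> emb1 (proj1 e) = e.
Proof.
case/andP => /eqP hl /forallP hm; apply/ffunP; apply: idx_case.
- by move=> a; rewrite emb1_fi ffunE.
- by move=> b; rewrite emb1_mi; apply: val_inj; rewrite /= (eqP (hm b)).
- by rewrite emb1_li; apply: val_inj; rewrite /= hl.
Qed.
Lemma emb2K e : type2 e -> emb2 (proj2 e) = e.
Proof.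
case/andP => /eqP hl /forallP hm; apply/ffunP; apply: idx_case.
- by move=> a; rewrite emb2_fi; apply: val_inj; rewrite /= (eqP (hm a)).
- by move=> b; rewrite emb2_mi ffunE.
- by rewrite emb2_li; apply: val_inj => /=; rewrite hl modn_small.
Qed.

Definition pr1 (t : {ffun 'I_(n+m+1) -> F}) : {ffun 'I_n -> F} := [ffun a => t (fi a)].
Definition pr2 (t : {ffun 'I_(n+m+1) -> F}) : {ffun 'I_m -> F} := [ffun b => t (mi b)].

Lemma mon_emb1 e1 (t : 'I_(n+m+1) -> F) :
  \prod_(i < n+m+1) t i ^+ (emb1 e1 i : nat) = \prod_(a < n) t (fi a) ^+ (e1 a : nat).
Proof.
rewrite big_split_ord big_ord1 big_split_ord /= emb1_li expr0 mulr1.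
rewrite [X in _ * X]big1 ?mulr1; last by move=> b _; rewrite emb1_mi expr0.
by apply: eq_bigr => a _; rewrite emb1_fi.
Qed.

Lemma mon_emb2 e2 (t : 'I_(n+m+1) -> F) :
  \prod_(i < n+m+1) t i ^+ (emb2 e2 i : nat) = t li * \prod_(b < m) t (mi b) ^+ (e2 b : nat).
Proof.
rewrite big_split_ord big_ord1 big_split_ord /= emb2_li o1E expr1.
rewrite [X in X * _ * _]big1 ?mul1r; last by move=> b _; rewrite emb2_fi expr0.
by rewrite mulrC; congr (_ * _); apply: eq_bigr => a _; rewrite emb2_mi.
Qed.

Definition Gc (c : coefs F (n+m+1)) : coefs F n := [ffun e1 => c (emb1 e1)].
Definition Hc (c : coefs F (n+m+1)) : coefs F m := [ffun e2 => c (emb2 e2)].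

Lemma evalc_join (c : coefs F (n+m+1)) :
  (forall e, c e != 0 -> type1 e || type2 e) ->
  forall t : {ffun 'I_(n+m+1) -> F},
  evalc c t = evalc (Gc c) (pr1 t) + t li * evalc (Hc c) (pr2 t).
Proof.
move=> hc t; rewrite /evalc (bigID type1) /= [X in _ + X](bigID type2) /=.
rewrite [X in _ + (_ + X)]big1 ?addr0; last first.
  move=> e /andP[h1 h2]; case: (eqVneq (c e) 0) => [->|/hc]; first by rewrite mul0r.
  by rewrite (negPf h1) (negPf h2).
rewrite [X in _ + X](eq_bigl type2); last first.
  by move=> e /=; case h: (type2 e); rewrite ?andbF ?andbT //; apply: type21.
congr (_ + _).
  rewrite (reindex_onto emb1 proj1); last by move=> e; apply: emb1K.
  rewrite (eq_bigl xpredT); last by move=> e; rewrite type1_emb1 proj1K eqxx.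
  by apply: eq_bigr => e1 _; rewrite mon_emb1 ffunE; congr (_ * _); apply: eq_bigr => a _; rewrite ffunE.
rewrite (reindex_onto emb2 proj2); last by move=> e; apply: emb2K.
rewrite (eq_bigl xpredT); last by move=> e; rewrite type2_emb2 proj2K eqxx.
rewrite mulr_sumr; apply: eq_bigr => e2 _; rewrite mon_emb2 ffunE mulrCA; congr (_ * (_ * _)).
by apply: eq_bigr => a _; rewrite ffunE.
Qed.

End Join.

Lemma in_conv_coord k (V : seq 'rV[int]_k) x : in_conv V x <->
  exists lam : 'I_(size V) -> rat, [/\ forall j, 0 <= lam j, \sum_j lam j = 1 &
    forall a, x 0 a = \sum_j lam j * ((nth 0 V j) 0 a)%:~R].
Proof.
split=> -[lam [h1 h2 h3]]; exists lam; split => //.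
  by move=> a; rewrite h3 summxE; apply: eq_bigr => j _; rewrite !mxE.
by apply/rowP => a; rewrite h3 summxE; apply: eq_bigr => j _; rewrite !mxE.
Qed.

Section Conv.
Variables (n m : nat) (VP : seq 'rV[int]_n) (VQ : seq 'rV[int]_m).
Local Notation fi a := (@lshift (n+m) 1 (@lshift n m a)).
Local Notation mi b := (@lshift (n+m) 1 (@rshift n m b)).
Local Notation li := (@rshift (n+m) 1 (@ord0 0)).
Local Notation J := (join_pts VP VQ).

Lemma size_join : size J = (size VP + size VQ)%N.
Proof. by rewrite size_cat !size_map. Qed.

Lemma nth_joinl (j : nat) : (j < size VP)%N ->
  nth 0 J j = row_mx (row_mx (nth 0 VP j) 0) 0.
Proof. by move=> hj; rewrite nth_cat size_map hj (nth_map 0). Qed.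

Lemma nth_joinr (j : nat) : (j < size VQ)%N ->
  nth 0 J (size VP + j) = row_mx (row_mx 0 (nth 0 VQ j)) 1.
Proof.
by move=> hj; rewrite nth_cat size_map ltnNge leq_addr /= addKn (nth_map 0).
Qed.

Lemma sum_join (f : 'I_(size J) -> rat) :
  \sum_k f k = \sum_(j < size VP) f (cast_ord (esym size_join) (lshift _ j))
             + \sum_(j < size VQ) f (cast_ord (esym size_join) (rshift _ j)).
Proof.
rewrite (reindex (cast_ord (esym size_join))) /=; first by rewrite big_split_ord.
by apply: onW_bij; exists (cast_ord size_join); [exact: cast_ordKV | exact: cast_ordK].
Qed.

Lemma in_conv_join x : in_conv J x <->
  exists (al : 'I_(size VP) -> rat) (be : 'I_(size VQ) -> rat),
  [/\ (forall j, 0 <= al j) /\ (forall j, 0 <= be j),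
      \sum_j al j + \sum_j be j = 1,
      forall a, x 0 (fi a) = \sum_j al j * ((nth 0 VP j) 0 a)%:~R,
      forall b, x 0 (mi b) = \sum_j be j * ((nth 0 VQ j) 0 b)%:~R &
      x 0 li = \sum_j be j].
Proof.
split.
  move=> /in_conv_coord [lam [h1 h2 h3]].
  exists (fun j => lam (cast_ord (esym size_join) (lshift _ j))).
  exists (fun j => lam (cast_ord (esym size_join) (rshift _ j))).
  split.
  - by split => j; apply: h1.
  - by rewrite -h2 sum_join.
  - move=> a; rewrite h3 sum_join [X in _ + X]big1 ?addr0.
      by apply: eq_bigr => j _ /=; rewrite nth_joinl // !row_mxEl.
    by move=> j _ /=; rewrite nth_joinr // !row_mxEl mxE mulr0.
  - move=> b; rewrite h3 sum_join big1 ?add0r.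
      by apply: eq_bigr => j _ /=; rewrite nth_joinr // row_mxEl row_mxEr.
    by move=> j _ /=; rewrite nth_joinl // row_mxEl row_mxEr mxE mulr0.
  - rewrite h3 sum_join big1 ?add0r.
      by apply: eq_bigr => j _ /=; rewrite nth_joinr // row_mxEr mxE mulr1.
    by move=> j _ /=; rewrite nth_joinl // row_mxEr mxE mulr0.
move=> [al [be [[h1 h1'] h2 hf hm hl]]].
apply/in_conv_coord.
exists (fun k => match split (cast_ord size_join k) with inl j => al j | inr j => be j end).
have EL j : cast_ord size_join (cast_ord (esym size_join) (lshift (size VQ) j)) = lshift _ j.
  exact: cast_ordKV.
have ER j : cast_ord size_join (cast_ord (esym size_join) (rshift (size VP) j)) = rshift _ j.
  exact: cast_ordKV.
split.
- move=> k; case: split => j; [exact: h1 | exact: h1'].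
- by rewrite sum_join -h2; congr (_ + _); apply: eq_bigr => j _; rewrite ?EL ?ER ?splitl ?splitr.
- apply: idx_case.
  + move=> a; rewrite hf sum_join [X in _ + X]big1 ?addr0.
      by apply: eq_bigr => j _ /=; rewrite EL splitl nth_joinl // !row_mxEl.
    by move=> j _ /=; rewrite ER splitr nth_joinr // !row_mxEl mxE mulr0.
  + move=> b; rewrite hm sum_join [X in _ = X + _]big1 ?add0r.
      by apply: eq_bigr => j _ /=; rewrite ER splitr nth_joinr // row_mxEl row_mxEr.
    by move=> j _ /=; rewrite EL splitl nth_joinl // row_mxEl row_mxEr mxE mulr0.
  + rewrite hl sum_join [X in _ = X + _]big1 ?add0r.
      by apply: eq_bigr => j _ /=; rewrite ER splitr nth_joinr // row_mxEr mxE mulr1.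
    by move=> j _ /=; rewrite EL splitl nth_joinl // row_mxEr mxE mulr0.
Qed.
End Conv.

From mathcomp Require Import lra zify ring.

Section Main.
Variables (F : finFieldType) (n m : nat) (VP : seq 'rV[int]_n) (VQ : seq 'rV[int]_m).
Local Notation q := #|F|.
Local Notation fi a := (@lshift (n+m) 1 (@lshift n m a)).
Local Notation mi b := (@lshift (n+m) 1 (@rshift n m b)).
Local Notation li := (@rshift (n+m) 1 (@ord0 0)).
Local Notation J := (join_pts VP VQ).
Hypothesis q3 : (1 < q.-1)%N.

Lemma join_type (c : coefs F (n+m+1)) : inL J c -> forall e, c e != 0 -> type1 e || type2 e.
Proof.
move=> hc e /hc /in_conv_join [al [be [[h1 h1'] hs hf hm hl]]].
rewrite mxE in hl.
have sa0 : 0 <= \sum_j al j by apply: sumr_ge0 => j _.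
have sb0 : 0 <= \sum_j be j by apply: sumr_ge0 => j _.
have hle : ((e li : nat) <= 1)%N by rewrite -(lern1 rat) hl; lra.
have : ((e li : nat) == 0)%N || ((e li : nat) == 1)%N.
  by move: hle; case: (nat_of_ord (e li)) => [|[|]].
case/orP => /eqP E; rewrite E /= in hl.
  have hb := psumr_eq0P (fun j _ => h1' j) (esym hl).
  apply/orP; left; rewrite /type1 E eqxx /=; apply/forallP => b.
  have := hm b; rewrite mxE big1 => [/eqP|j _]; first by rewrite pnatr_eq0.
  by rewrite hb // mul0r.
have sa : \sum_j al j = 0 by rewrite -hl in hs; lra.
have ha := psumr_eq0P (fun j _ => h1 j) sa.
apply/orP; right; rewrite /type2 E eqxx /=; apply/forallP => a.
have := hf a; rewrite mxE big1 => [/eqP|j _]; first by rewrite pnatr_eq0.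
by rewrite ha // mul0r.
Qed.

Lemma joinG (c : coefs F (n+m+1)) : inL J c -> inL VP (Gc c).
Proof.
move=> hc e1; rewrite ffunE => /hc /in_conv_join [al [be [[h1 h1'] hs hf hm hl]]].
rewrite mxE emb1_li /= in hl.
apply/in_conv_coord; exists al; split => //.
  by rewrite -hl in hs; lra.
by move=> a; have := hf a; rewrite !mxE emb1_fi.
Qed.

Lemma joinH (c : coefs F (n+m+1)) : inL J c -> inL VQ (Hc c).
Proof.
move=> hc e2; rewrite ffunE => /hc /in_conv_join [al [be [[h1 h1'] hs hf hm hl]]].
rewrite mxE emb2_li o1E // in hl.
apply/in_conv_coord; exists be; split => //.
by move=> b; have := hm b; rewrite !mxE emb2_mi.
Qed.

Lemma join_nz (c : coefs F (n+m+1)) : inL J c -> c != 0 -> (Gc c != 0) || (Hc c != 0).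
Proof.
move=> hc; apply: contraNT; rewrite negb_or !negbK => /andP[/eqP hg /eqP hh].
apply/eqP/ffunP => e; rewrite ffunE; case: (eqVneq (c e) 0) => // /(join_type hc).
case/orP => ht.
  by have := congr1 (fun f : coefs F n => f (proj1 e)) hg; rewrite /= !ffunE (emb1K ht) => ->.
by have := congr1 (fun f : coefs F m => f (proj2 e)) hh; rewrite /= !ffunE (emb2K q3 ht) => ->.
Qed.

Definition mkc (g : coefs F n) (h : coefs F m) : coefs F (n+m+1) :=
  [ffun e => if type1 e then g (proj1 e) else if type2 e then h (proj2 e) else 0].

Lemma G_mkc g h : Gc (mkc g h) = g.
Proof. by apply/ffunP => e1; rewrite !ffunE type1_emb1 proj1K. Qed.
Lemma H_mkc g h : Hc (mkc g h) = h.
Proof. by apply/ffunP => e2; rewrite !ffunE type1_emb2 // type2_emb2 // proj2K. Qed.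

Lemma mkc_inL g h : inL VP g -> inL VQ h -> inL J (mkc g h).
Proof.
move=> hg hh e; rewrite ffunE; case: ifP => t1.
  move=> /hg /in_conv_coord [lam [l0 ls lx]].
  case/andP: t1 => /eqP el /forallP em.
  apply/in_conv_join; exists lam, (fun _ => 0); split.
  - by split => // j.
  - by rewrite [X in _ + X]big1 ?addr0.
  - by move=> a; rewrite mxE -lx mxE ffunE.
  - by move=> b; rewrite mxE (eqP (em b)) big1 // => j _; rewrite mul0r.
  - by rewrite mxE el big1.
case: ifP => t2; last by rewrite eqxx.
move=> /hh /in_conv_coord [lam [l0 ls lx]].
case/andP: t2 => /eqP el /forallP ea.
apply/in_conv_join; exists (fun _ => 0), lam; split.
- by split => // j.
- by rewrite big1 ?add0r.
- by move=> a; rewrite mxE (eqP (ea a)) big1 // => j _; rewrite mul0r.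
- by move=> b; rewrite mxE -lx mxE ffunE.
- by rewrite mxE el ls.
Qed.

End Main.

Lemma bool_id4 (a b c d : bool) (K : nat) :
  ((a && b) * (K * c * d + (~~c) * (~~d)) = K * ((a*c) * (b*d)) + (a * ~~c) * (b * ~~d))%N.
Proof.
by case: a; case: b; case: c; case: d => /=; rewrite ?mul1n ?muln1 ?mul0n ?muln0 ?addn0 ?add0n.
Qed.

Lemma sum_bool (T : finType) (P : pred T) : (\sum_x (P x : nat) = #|[set x | P x]|)%N.
Proof. by rewrite -sum1dep_card [RHS]big_mkcond; apply: eq_bigr => x _; case: (P x). Qed.

Section Count.
Variables (F : finFieldType) (n m : nat).
Local Notation q := #|F|.
Local Notation fi a := (@lshift (n+m) 1 (@lshift n m a)).
Local Notation mi b := (@lshift (n+m) 1 (@rshift n m b)).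
Local Notation li := (@rshift (n+m) 1 (@ord0 0)).

Definition tor k : {set {ffun 'I_k -> F}} := [set t : {ffun 'I_k -> F} | [forall i, t i != 0]].

Lemma card_tor k : #|tor k| = (q.-1 ^ k)%N.
Proof.
have -> : (q.-1 ^ k)%N = #|(ffun_on (predC1 (0:F)) : {pred {ffun 'I_k -> F}})| by rewrite card_ffun_on cardC1 card_ord.
apply: eq_card => t; rewrite inE; apply/forallP/ffun_onP => H i; have := H i; by rewrite inE.
Qed.

Definition mk (x : {ffun 'I_n -> F}) (y : {ffun 'I_m -> F}) (z : F) : {ffun 'I_(n+m+1) -> F} :=
  [ffun i => match split i with
             | inl j => match split j with inl a => x a | inr b => y b end
             | inr _ => z end].

Lemma pr1_mk x y z : pr1 (mk x y z) = x.
Proof. by apply/ffunP => a; rewrite !ffunE !splitl. Qed.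
Lemma pr2_mk x y z : pr2 (mk x y z) = y.
Proof. by apply/ffunP => a; rewrite !ffunE splitl splitr. Qed.
Lemma mk_li x y z : mk x y z li = z.
Proof. by rewrite !ffunE splitr. Qed.

Lemma mk_bij : bijective (fun p : ({ffun 'I_n -> F} * {ffun 'I_m -> F}) * F => mk p.1.1 p.1.2 p.2).
Proof.
exists (fun t => ((pr1 t, pr2 t), t li)).
  by case=> [[x y] z] /=; rewrite pr1_mk pr2_mk mk_li.
move=> t /=; apply/ffunP; apply: idx_case => [a|b|]; rewrite !ffunE ?splitl ?splitr //.
all: by rewrite ffunE.
Qed.

Lemma mk_tor x y z : [forall i, mk x y z i != 0] =
  [&& [forall a, x a != 0], [forall b, y b != 0] & z != 0].
Proof.
apply/forallP/and3P => [H|[/forallP Hx /forallP Hy Hz]].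
  split; [apply/forallP=> a; have := H (fi a) | apply/forallP => b; have := H (mi b) | have := H li];
  by rewrite ffunE ?splitl ?splitr.
by apply: idx_case => [a|b|]; rewrite ffunE ?splitl ?splitr.
Qed.

Lemma inner_count (gx hy : F) (b : bool) :
  (\sum_(z : F) (if b && (z != 0%R) && (gx + z * hy == 0)%R then 1 else 0) =
   b * (q.-1 * (gx == 0%R) * (hy == 0%R) + (gx != 0%R) * (hy != 0%R)))%N.
Proof.
case: b; last by rewrite big1 // mul0n.
rewrite mul1n; case: (eqVneq hy 0) => [->|hnz].
  rewrite muln1 muln0 addn0; case: (eqVneq gx 0) => [->|gnz].
    rewrite muln1 -(cardC1 (0:F)) -sum1_card [RHS]big_mkcond; apply: eq_bigr => z _ /=.
    by rewrite mulr0 addr0 eqxx andbT inE.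
  by rewrite muln0 big1 // => z _; rewrite mulr0 addr0 (negPf gnz) andbF.
rewrite muln0 add0n muln1.
have E z : (z != 0) && (gx + z * hy == 0) = (z == - gx / hy) && (gx != 0).
  have -> : (gx + z * hy == 0) = (z == - gx / hy).
    apply/eqP/eqP => [H|->]; last by rewrite divfK // addrN.
    by move/eqP: H; rewrite addr_eq0 => /eqP ->; rewrite opprK mulfK.
  case: (eqVneq z (- gx / hy)) => [->|]; rewrite ?andbF ?andbT //.
  by rewrite mulf_eq0 invr_eq0 oppr_eq0 (negPf hnz) orbF.
under eq_bigr => z _ do rewrite /= E.
case: (gx != 0); last by rewrite big1 // => z _; rewrite andbF.
by rewrite -big_mkcond /= (eq_bigl (fun z => z == - gx / hy)) ?big_pred1_eq // => z; rewrite andbT.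
Qed.

Lemma zg_sum k (g : coefs F k) :
  (\sum_(x : {ffun 'I_k -> F}) [forall a, x a != 0%R] * (evalc g x == 0%R) = #|zeros g|)%N.
Proof.
under eq_bigr => x _ do rewrite mulnb.
by rewrite sum_bool; apply: eq_card => x; rewrite !inE.
Qed.

Lemma zgc_sum k (g : coefs F k) :
  (\sum_(x : {ffun 'I_k -> F}) [forall a, x a != 0%R] * (evalc g x != 0%R) = #|tor k| - #|zeros g|)%N.
Proof.
have : (#|tor k| = #|zeros g| + \sum_(x : {ffun 'I_k -> F}) [forall a, x a != 0%R] * (evalc g x != 0%R))%N.
  rewrite -zg_sum -big_split /=.
  have -> : #|tor k| = #|[set x : {ffun 'I_k -> F} | [forall a, x a != 0%R]]| by [].
  rewrite -sum_bool; apply: eq_bigr => x _.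
  by case: [forall a, x a != 0%R]; case: (evalc g x == 0%R).
by move=> ->; rewrite addKn.
Qed.

Lemma zeros_count (c : coefs F (n+m+1)) (g : coefs F n) (h : coefs F m) :
  (forall t : {ffun 'I_(n+m+1) -> F}, evalc c t = evalc g (pr1 t) + t li * evalc h (pr2 t)) ->
  #|zeros c| = (q.-1 * #|zeros g| * #|zeros h| + (#|tor n| - #|zeros g|) * (#|tor m| - #|zeros h|))%N.
Proof.
move=> hev.
have E1 : #|zeros c| = (\sum_(x : {ffun 'I_n -> F}) \sum_(y : {ffun 'I_m -> F}) \sum_(z : F)
   (if [forall a, x a != 0%R] && [forall b, y b != 0%R] && (z != 0%R) &&
       (evalc g x + z * evalc h y == 0)%R then 1 else 0))%N.
  rewrite pair_bigA pair_bigA -sum1_card big_mkcond /=.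
  rewrite (reindex (fun p : ({ffun 'I_n -> F} * {ffun 'I_m -> F}) * F => mk p.1.1 p.1.2 p.2)) /=;
    last by apply: onW_bij; exact: mk_bij.
  apply: eq_bigr => -[[x y] z] _ /=.
  by rewrite inE mk_tor hev pr1_mk pr2_mk mk_li !andbA.
rewrite E1.
under eq_bigr => x _ do under eq_bigr => y _ do rewrite inner_count bool_id4.
under eq_bigr => x _ do rewrite big_split /= -!big_distrr /=.
rewrite big_split /= -big_distrr -!big_distrl /= !zg_sum !zgc_sum.
by rewrite mulnA.
Qed.
End Count.

Section Nm.
Variables (F : finFieldType) (k : nat) (V : seq 'rV[int]_k).
Local Notation q := #|F|.

Lemma Nmax_ge (c : coefs F k) : c != 0 -> inL V c -> (#|zeros c| <= Nmax F V)%N.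
Proof. by move=> h1 h2; apply: leq_bigmax_cond; rewrite h1 /=; apply/asboolP. Qed.

Lemma Nmax_le K : (forall c : coefs F k, c != 0 -> inL V c -> (#|zeros c| <= K)%N) ->
  (Nmax F V <= K)%N.
Proof. by move=> H; apply/bigmax_leqP => c /andP[h1 /asboolP h2]; exact: H. Qed.

Lemma zeros_le_tor (c : coefs F k) : (#|zeros c| <= #|tor F k|)%N.
Proof. by apply: subset_leq_card; apply/subsetP => t; rewrite !inE => /andP[]. Qed.

Lemma Nmax_le_tor : (Nmax F V <= #|tor F k|)%N.
Proof. by apply: Nmax_le => c _ _; apply: zeros_le_tor. Qed.

Lemma zeros0 : #|zeros (0 : coefs F k)| = #|tor F k|.
Proof.
apply: eq_card => t; rewrite !inE.
suff -> : evalc (0 : coefs F k) t = 0 by rewrite eqxx andbT.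
by rewrite /evalc big1 // => e _; rewrite ffunE mul0r.
Qed.

Lemma monomial : V != [::] -> in_box q V ->
  exists c : coefs F k, [/\ c != 0, inL V c & #|zeros c| = 0%N].
Proof.
move=> hV hbox.
have h0 : (0 < size V)%N by rewrite lt0n size_eq0.
pose j0 : 'I_(size V) := Ordinal h0.
pose v := nth 0 V 0.
pose xv : 'rV[rat]_k := \row_a ((v 0 a)%:~R).
have hxv : in_conv V xv.
  apply/in_conv_coord; exists (fun j : 'I_(size V) => ((j : nat) == 0%N)%:R); split.
  - by move=> j; apply: ler0n.
  - rewrite (bigD1 j0) //= big1 ?addr0 // => j hj.
    have : (j : nat) != 0%N by apply: contra hj => /eqP h; apply/eqP/val_inj.
    by move/negPf ->.
  - move=> a; rewrite mxE (bigD1 j0) //= big1 ?addr0 ?mul1r // => j hj.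
    have : (j : nat) != 0%N by apply: contra hj => /eqP h; apply/eqP/val_inj.
    by move/negPf ->; rewrite mul0r.
pose eP : expo F k := [ffun a => Ordinal (ltn_pmod (absz (v 0 a)) (qpos F))].
have heP : expo_vec eP = xv.
  apply/rowP => a; rewrite !mxE ffunE /=.
  have := hbox xv hxv a; rewrite mxE.
  case: (v 0 a) => p /andP[h1 h2]; last by move: h1; rewrite ler0z.
  rewrite /= modn_small; first by rewrite pmulrn.
  move: h2; rewrite -pmulrn ler_nat => h2.
  by have := qpos F; move: h2; case: #|F| => [|[|r]] //=; lia.
exists [ffun e => (e == eP)%:R]; split.
- apply/eqP => /ffunP /(_ eP); rewrite !ffunE eqxx => /eqP; by rewrite oner_eq0.
- move=> e; rewrite ffunE. move=> hne. have he : e = eP. apply/eqP. move: hne. case: (e == eP) => //. by rewrite eqxx. rewrite he heP; exact: hxv.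
- apply/eqP; rewrite cards_eq0; apply/eqP/setP => t; rewrite !inE.
  apply/negbTE; rewrite negb_and; case: forallP => //= H.
  rewrite /evalc (bigD1 eP) //= [X in _ + X]big1 ?addr0; last first.
    by move=> e; rewrite ffunE; case: (e == eP) => //= _; rewrite mul0r.
  rewrite ffunE eqxx mul1r; apply/prodf_neq0 => a _.
  by rewrite expf_neq0 // H.
Qed.

Lemma Nmax_attained : V != [::] -> in_box q V ->
  exists c : coefs F k, [/\ c != 0, inL V c & #|zeros c| = Nmax F V].
Proof.
move=> hV hb; have [c0 [h1 h2 _]] := monomial hV hb.
have P0 : (c0 != 0) && `[< inL V c0 >] by rewrite h1; apply/asboolP.
case: (@arg_maxnP _ c0 (fun c : coefs F k => (c != 0) && `[< inL V c >]) (fun c => #|zeros c|) P0) => c /andP[c1 /asboolP c2] cmax.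
exists c; split => //; apply/eqP; rewrite eqn_leq Nmax_ge //=; apply: Nmax_le => d d1 d2.
by apply: cmax; rewrite d1; apply/asboolP.
Qed.
End Nm.

Local Open Scope nat_scope.
Lemma arith (r u v U V a b : nat) : (u <= U)%N -> (U <= a)%N -> (v <= V)%N -> (V <= b)%N ->
  (r*u*v + (a-u)*(b-v) <= maxn (a*b) (r*U*V + (a-U)*(b-V)))%N.
Proof.
move=> h1 h2 h3 h4; rewrite leq_max.
have [a1 ->] : exists a1, (a = U + a1)%N by exists (a - U); rewrite subnKC.
have [u1 ->] : exists u1, (U = u + u1)%N by exists (U - u); rewrite subnKC.
have [b1 ->] : exists b1, (b = V + b1)%N by exists (b - V); rewrite subnKC.
have [v1 ->] : exists v1, (V = v + v1)%N by exists (V - v); rewrite subnKC.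
have E1 : (u + u1 + a1 - u = u1 + a1)%N by lia.
have E2 : (u + u1 + a1 - (u + u1) = a1)%N by lia.
have E3 : (v + v1 + b1 - v = v1 + b1)%N by lia.
have E4 : (v + v1 + b1 - (v + v1) = b1)%N by lia.
rewrite E1 E2 E3 E4.
case: (leqP (r*v)%N (v1 + b1)%N) => c1.
  apply/orP; left; have := leq_mul (leqnn u) c1; nia.
case: (leqP (r*(u+u1))%N a1) => c2.
  apply/orP; left; have := leq_mul (leqnn v) c2; have := leq_mul (leqnn u1) (ltnW c1); nia.
apply/orP; right; have := leq_mul (leqnn v1) (ltnW c2); have := leq_mul (leqnn u1) (ltnW c1); nia.
Qed.

Local Open Scope ring_scope.
Lemma minmax (D : rat) (x y : nat) : 0 < D ->
  (D - (maxn x y)%:R) / D = Num.min ((D - x%:R) / D) ((D - y%:R) / D).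
Proof.
move=> hD; have hle (u v : nat) : (u <= v)%N -> (D - v%:R) / D <= (D - u%:R) / D.
  by move=> h; apply: ler_wpM2r; [rewrite invr_ge0 ltW | rewrite lerD2l lerN2 ler_nat].
case: (leqP x y) => h.
  by rewrite min_r // hle.
by rewrite min_l // hle // ltnW.
Qed.

Lemma mkc_nz (F : finFieldType) n m (g : coefs F n) (h : coefs F m) :
  (1 < #|F|.-1)%N -> (g != 0) || (h != 0) -> mkc g h != 0.
Proof.
move=> q3 /orP[] hnz; apply: contraNneq hnz => hc.
  by rewrite -(G_mkc g h) hc; apply/eqP/ffunP => e; rewrite !ffunE.
by rewrite -(H_mkc q3 g h) hc; apply/eqP/ffunP => e; rewrite !ffunE.
Qed.

Unset Implicit Arguments.
Theorem mainTheorem4 (F : finFieldType) (n m : nat)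
  (VP : seq 'rV[int]_n) (VQ : seq 'rV[int]_m) :
  (3 <= #|F|)%N ->
  VP != [::] -> VQ != [::] ->
  in_box #|F| VP -> in_box #|F| VQ ->
  let q := #|F| in
  let NP := Nmax F VP in
  let NQ := Nmax F VQ in
  let dP := delta F VP in
  let dQ := delta F VQ in
  Nmax F (join_pts VP VQ) =
    maxn (maxn ((q.-1) ^ (n + m)) (NP * (q.-1) ^ m.+1))
         (maxn (NQ * (q.-1) ^ n.+1)
               (q.-1 * NP * NQ + ((q.-1) ^ n - NP) * ((q.-1) ^ m - NQ)))%N
  /\
  delta F (join_pts VP VQ) =
    Num.min (Num.min (1 - 1 / (q.-1)%:R) dP)
            (Num.min dQ (dP + dQ - dP * dQ * (q%:R / (q.-1)%:R))).
Proof.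
move=> q3' hVP hVQ bP bQ; cbv zeta.
have q3 : (1 < #|F|.-1)%N by move: q3'; case: #|F| => [|[|[|r]]].
set NP := Nmax F VP; set NQ := Nmax F VQ.
set a := (#|F|.-1 ^ n)%N; set b := (#|F|.-1 ^ m)%N.
have cj (c : coefs F (n+m+1)) : inL (join_pts VP VQ) c -> #|zeros c| =
   (#|F|.-1 * #|zeros (Gc c)| * #|zeros (Hc c)| + (a - #|zeros (Gc c)|) * (b - #|zeros (Hc c)|))%N.
  move=> hc; rewrite /a /b -!card_tor; apply: zeros_count; apply: evalc_join => //.
  exact: join_type hc.
have hmk (g : coefs F n) (h : coefs F m) : inL VP g -> inL VQ h -> #|zeros (mkc g h)| =
   (#|F|.-1 * #|zeros g| * #|zeros h| + (a - #|zeros g|) * (b - #|zeros h|))%N.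
  by move=> hg hh; rewrite cj ?G_mkc ?H_mkc //; exact: mkc_inL.
have NPa : (NP <= a)%N by have := Nmax_le_tor F VP; rewrite card_tor.
have NQb : (NQ <= b)%N by have := Nmax_le_tor F VQ; rewrite card_tor.
have [g0 [g0nz g0in g0z]] := Nmax_attained hVP bP.
have [h0 [h0nz h0in h0z]] := Nmax_attained hVQ bQ.
have [mP [mPnz mPin mPz]] := monomial hVP bP.
have [mQ [mQnz mQin mQz]] := monomial hVQ bQ.
have in0 k (V : seq 'rV[int]_k) : inL V (0 : coefs F k) by move=> e; rewrite ffunE eqxx.
have hN : Nmax F (join_pts VP VQ) =
    maxn (maxn ((#|F|.-1) ^ (n + m)) (NP * (#|F|.-1) ^ m.+1))
         (maxn (NQ * (#|F|.-1) ^ n.+1)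
               (#|F|.-1 * NP * NQ + ((#|F|.-1) ^ n - NP) * ((#|F|.-1) ^ m - NQ)))%N.
  apply/eqP; rewrite eqn_leq; apply/andP; split.
  - apply: Nmax_le => c cnz cin; rewrite cj //.
    have hu := zeros_le_tor (Gc c); rewrite card_tor -/a in hu.
    have hv := zeros_le_tor (Hc c); rewrite card_tor -/b in hv.
    have hor := join_nz q3 cin cnz.
    case: (eqVneq (Gc c) 0) => [g0'|gnz].
      have hnz : Hc c != 0 by move: hor; rewrite g0' eqxx.
      rewrite g0' zeros0 card_tor -/a subnn mul0n addn0.
      have hv' := Nmax_ge hnz (joinH q3 cin).
      apply: (leq_trans _ (leq_maxr _ _)); apply: (leq_trans _ (leq_maxl _ _)).
      by rewrite expnS -/a mulnC; exact: leq_mul hv' (leqnn _).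
    case: (eqVneq (Hc c) 0) => [h0'|hnz].
      rewrite h0' zeros0 card_tor -/b subnn muln0 addn0.
      have hu' := Nmax_ge gnz (joinG cin).
      apply: (leq_trans _ (leq_maxl _ _)); apply: (leq_trans _ (leq_maxr _ _)).
      by rewrite expnS -/b -mulnA mulnCA; exact: leq_mul hu' (leqnn _).
    have hu' := Nmax_ge gnz (joinG cin).
    have hv' := Nmax_ge hnz (joinH q3 cin).
    apply: leq_trans (arith (#|F|.-1) hu' NPa hv' NQb) _.
    rewrite geq_max; apply/andP; split.
      by apply: (leq_trans _ (leq_maxl _ _)); apply: (leq_trans _ (leq_maxl _ _)); rewrite expnD.
    by apply: (leq_trans _ (leq_maxr _ _)); apply: (leq_trans _ (leq_maxr _ _)).
  - rewrite !geq_max -!andbA; apply/and4P; split.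
    + have := Nmax_ge (mkc_nz q3 (introT orP (or_introl mPnz))) (mkc_inL mPin mQin).
      by rewrite hmk // mPz mQz !muln0 add0n !subn0 -expnD.
    + have := Nmax_ge (mkc_nz q3 (introT orP (or_introl g0nz))) (mkc_inL g0in (in0 _ VQ)).
      by rewrite hmk // g0z zeros0 card_tor -/b subnn muln0 addn0 expnS; apply: leq_trans; nia.
    + have := Nmax_ge (mkc_nz q3 (introT orP (or_intror h0nz))) (mkc_inL (in0 _ VP) h0in).
      by rewrite hmk // h0z zeros0 card_tor -/a subnn mul0n addn0 expnS; apply: leq_trans; nia.
    + have := Nmax_ge (mkc_nz q3 (introT orP (or_introl g0nz))) (mkc_inL g0in h0in).
      by rewrite hmk // g0z h0z.
split => //.
have r0 : ((#|F|.-1)%:R : rat) != 0 by rewrite pnatr_eq0 -lt0n; apply: qpos.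
have D0 : 0 < ((#|F|.-1 ^ (n+m+1))%:R : rat).
  by rewrite ltr0n expn_gt0 qpos.
have hq : (#|F|%:R : rat) = (#|F|.-1)%:R + 1.
  by rewrite natr1 prednK //; apply: ltnW; apply: leq_trans q3'.
rewrite /delta hN !minmax //.
rewrite -/NP -/NQ -/a -/b.
have hNPa : (NP%:R : rat) <= a%:R by rewrite ler_nat.
rewrite ?natrD ?natrM ?natrB // hq /a /b !natrX.
set r := ((#|F|.-1)%:R : rat).
rewrite !exprD !exprS expr0 mulr1.
have A0 : r ^+ n != 0 by rewrite expf_neq0.
have B0 : r ^+ m != 0 by rewrite expf_neq0.
move: A0 B0; set A := r ^+ n; set B := r ^+ m => A0 B0.
congr (Num.min (Num.min _ _) (Num.min _ _)); field; rewrite ?A0 ?B0 ?r0 //.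
Qed.
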